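(* For every $m\in\mathbb{N}$ and every real $t$ with $|t|<1$, \[ \left(\frac{\arcsin t}{t}\right)^{m}=1+\sum_{k=1}^{\infty}(-1)^k\frac{Q(m,2k;2)}{\binom{m+2k}{m}}\frac{(2t)^{2k}}{(2k)!}, \] where the left-hand side is defined to be $1$ at $t=0$.
   Context: $s(n,k)$ ($n\ge k\ge 0$) denotes the signed Stirling numbers of the first kind, defined by $\frac{[\ln(1+x)]^k}{k!}=\sum_{n=k}^\infty s(n,k)\frac{x^n}{n!}$ for $|x|<1$; equivalently $\prod_{j=0}^{n-1}(z-j)=\sum_{k=0}^n s(n,k)z^k$. For $m\in\mathbb{N}$, $k\in\mathbb{N}_0$ and $\alpha\in\mathbb{R}$ define \[ Q(m,k;\alpha)=\sum_{\ell=0}^{k}\binom{m+\ell-1}{m-1}\, s(m+k-1,m+\ell-1)\left(\frac{m+k-\alpha}{2}\right)^{\ell}, \] with the convention $0^0=1$. *)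

(* Defs.v *)
From HB Require Import structures.
From mathcomp Require Import all_boot all_order all_algebra.
From mathcomp Require Import all_classical all_reals all_analysis.
Set Implicit Arguments. Unset Strict Implicit. Unset Printing Implicit Defensive.
Import Order.TTheory GRing.Theory Num.Theory.
Local Open Scope ring_scope.

Definition stirling1 (n k : nat) : int :=
  (\prod_(j < n) ('X - ((j : nat)%:Z)%:P) : {poly int})`_k.

Definition Qfun {R : realType} (m k : nat) (alpha : R) : R :=
  \sum_(l < k.+1)
     ('C(m + l - 1, m - 1))%:R * (stirling1 (m + k - 1) (m + l - 1))%:~R
     * (((m + k)%:R - alpha) / 2) ^+ l.

Definition asin_ratio_pow {R : realType} (m : nat) (t : R) : R :=
  if t == 0 then 1 else (asin t / t) ^+ m.

Definition asin_term {R : realType} (m k : nat) (t : R) : R :=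
  if k == 0%N then 1 else
  (-1) ^+ k * Qfun m (2 * k) (2 : R) / ('C(m + 2 * k, m))%:R
    * (2 * t) ^+ (2 * k) / ((2 * k)`!)%:R.

(* Main.v *)
Require Import Defs.
From HB Require Import structures.
From mathcomp Require Import all_boot all_order all_algebra.
From mathcomp Require Import all_classical all_reals all_analysis.
From mathcomp Require Import ring lra zify.
Set Implicit Arguments. Unset Strict Implicit. Unset Printing Implicit Defensive.
Import Order.TTheory GRing.Theory Num.Theory.
Import numFieldNormedType.Exports.
Local Open Scope classical_set_scope.
Local Open Scope ring_scope.
Ltac fld := field; rewrite ?pnatr_eq0 //=; try lra.
Ltac sh := match goal with |- ?g => idtac g end.

Section Comb.
Variable R : realType.

Definition x0 (n : nat) : R := (n%:R - 2) / 2.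
Definition PP (n : nat) : {poly R} :=
  \prod_(i < n.-1) ('X - ((i%:R : R) - x0 n)%:P).
Definition RR (n : nat) : {poly R} := if n is O then 1 else 'X * PP n.

Lemma RR_rec n : RR n.+2 = ('X^2 - ((n%:R ^+ 2 : R) / 4)%:P) * RR n.
Proof.
case: n => [|n].
  rewrite /RR /PP /= big_ord1 /x0 /=.
  have -> : (0%:R : R) - (2%:R - 2) / 2 = 0 by field.
  rewrite expr0n /= mul0r subr0 mulr1; ring.
rewrite /RR /PP /= big_ord_recl big_ord_recr /=.
rewrite (eq_bigr (fun i : 'I_n => 'X - ((i%:R : R) - x0 n.+1)%:P)); last first.
  move=> i _; congr ('X - _%:P); rewrite /bump /= /x0 add1n !mulrS; fld.
have e1 : ((ord0 : 'I_n.+1)%:R : R) - x0 n.+3 = - ((n%:R + 1)/2).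
  rewrite /x0 /= !mulrS; fld.
have e2 : ((bump 0 n)%:R : R) - x0 n.+3 = ((n%:R + 1)/2).
  rewrite /x0 /bump /= add1n !mulrS; fld.
have e3 : (n.+1%:R : R) ^+ 2 / 4 = ((n%:R + 1)/2) * ((n%:R + 1)/2).
  rewrite mulrS; fld.
rewrite e1 e2 e3; move: ((n%:R + 1)/2) => c.
rewrite polyCN polyCM; ring.
Qed.

Lemma RR_coef_rec n j : (RR n.+2)`_j =
  (if j is j'.+2 then (RR n)`_j' else 0) - (n%:R ^+ 2 / 4) * (RR n)`_j.
Proof.
rewrite RR_rec mulrBl coefB coefXnM coefCM.
by case: j => [|[|j]] //=; rewrite subn2.
Qed.

Lemma RR0 : RR 0 = 1. Proof. by []. Qed.
Lemma RR1 : RR 1 = 'X. Proof. by rewrite /RR /PP /= big_ord0 mulr1. Qed.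

Fixpoint ee (n j : nat) : R :=
  match n with
  | O => (j == 0%N)%:R
  | S O => (j == 1%N)%:R
  | S (S k) => (k ^ 2)%:R * ee k j + (if j is j'.+2 then ee k j' else 0)
  end.

Definition sgn (n : nat) : R := (-1) ^+ (n./2).

Lemma sgnSS n : sgn n.+2 = - sgn n.
Proof. by rewrite /sgn /= exprS mulN1r. Qed.

Lemma ee_RR n j : ee n j * 2 ^+ j * sgn j = 2 ^+ n * sgn n * (RR n)`_j.
Proof.
suff H : forall n, (forall j, ee n j * 2 ^+ j * sgn j = 2 ^+ n * sgn n * (RR n)`_j)
  /\ (forall j, ee n.+1 j * 2 ^+ j * sgn j = 2 ^+ n.+1 * sgn n.+1 * (RR n.+1)`_j).
  by case: (H n).
clear n j; elim=> [|n [IH1 IH2]].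
  split=> j.
    rewrite RR0 coef1 /=; case: j => [|j] /=; first by rewrite /sgn /= !mulr1.
    by rewrite !mul0r mulr0.
  rewrite RR1 coefX /=; case: j => [|[|j]] /=; rewrite ?mul0r ?mulr0 //.
  ring.
split=> // j.
rewrite RR_coef_rec sgnSS !exprS /=.
case: j => [|[|j]].
- have h := IH1 0%N.
  transitivity ((n ^ 2)%:R * (ee n 0 * 2 ^+ 0 * sgn 0)); first by rewrite /=; ring.
  rewrite h natrX; fld.
- have h := IH1 1%N.
  transitivity ((n ^ 2)%:R * (ee n 1 * 2 ^+ 1 * sgn 1)); first by rewrite /=; ring.
  rewrite h natrX; fld.
- have h1 := IH1 j.+2; have h2 := IH1 j.
  rewrite sgnSS !exprS in h1 *.
  set a := ee n j.+2 in h1 *; set b := ee n j in h2 *.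
  set p := 2 ^+ j in h1 h2 *; set s := sgn j in h1 h2 *.
  set A := 2 ^+ n in h1 h2 *; set B := sgn n in h1 h2 *.
  rewrite -natrX.
  transitivity ((n%:R ^+ 2) * (a * (2 * (2 * p)) * - s) + (-4) * (b * p * s)).
    rewrite natrX; ring.
  rewrite h1 h2; fld.
Qed.

Lemma ee_ge0 n j : 0 <= ee n j.
Proof.
elim/ltn_ind: n j => -[|[|n]] IH j /=; rewrite ?ler0n //.
apply: addr_ge0; first by apply: mulr_ge0; rewrite ?ler0n ?IH.
by case: j => [|[|j]] //; apply: IH.
Qed.

Lemma ee_le n j : ee n j <= n`!%:R.
Proof.
elim/ltn_ind: n j => -[|[|n]] IH j /=.
- by case: (j == 0%N); rewrite ?ler0n ?lexx.
- by case: (j == 1%N); rewrite ?ler0n ?lexx.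
have h1 := IH n (leqW (ltnSn n)) j.
have h2 : (if j is j'.+2 then ee n j' else 0) <= n`!%:R.
  by case: (j) => [|[|j0]] //; rewrite ?ler0n // IH.
have -> : ((n.+2)`!%:R : R) = (n.+1 * n.+2)%:R * n`!%:R.
  by rewrite !factS !natrM; ring.
have hn : 0 <= (n`!%:R : R) by rewrite ler0n.
apply: le_trans (_ : (n ^ 2)%:R * n`!%:R + n`!%:R <= _).
  by apply: lerD => //; apply: ler_wpM2l; rewrite ?ler0n.
rewrite -[X in _ + X]mul1r -mulrDl ler_wpM2r //; rewrite natr1 ler_nat.
by rewrite mulSn mulnS; nia.
Qed.

Lemma ee_lt n j : (n < j)%N -> ee n j = 0.
Proof.
elim/ltn_ind: n j => -[|[|n]] IH j /= hj.
- by case: j hj.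
- by case: j hj => [|[|j]].
rewrite IH // ?mulr0 ?add0r; last by lia.
by case: j hj => [|[|j]] // hj; rewrite IH //; lia.
Qed.

Lemma ee_odd n j : odd (n + j) -> ee n j = 0.
Proof.
elim/ltn_ind: n j => -[|[|n]] IH j /= hj.
- by case: j hj.
- by case: j hj => [|[|j]] //=; rewrite ?oddD /= ?negbK.
rewrite IH // ?mulr0 ?add0r; last by move: hj; rewrite !oddD /= ?negbK ?oddD.
case: j hj => [|[|j]] // hj; rewrite IH //.
by move: hj; rewrite !oddD /= !negbK.
Qed.

Definition cc (j n : nat) : R := j`!%:R * ee n j / n`!%:R.

Lemma cc_rec j n : (n.+1 * n.+2)%:R * cc j n.+2 =
  (n ^ 2)%:R * cc j n + (j * j.-1)%:R * cc j.-2 n.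
Proof.
rewrite /cc /=.
have hf : (n`!%:R : R) != 0 by rewrite pnatr_eq0 -lt0n fact_gt0.
rewrite !factS !natrM.
have hn := ler0n R n.
case: j => [|[|j]] /=; rewrite ?mul0n ?mul0r ?addr0 ?factS ?natrM; field;
  rewrite hf /=; repeat (apply/andP; split); apply/lt0r_neq0; lra.
Qed.

Lemma cc0 j : cc j 0 = (j == 0%N)%:R.
Proof. by rewrite /cc /=; case: j => [|j] /=; rewrite ?mulr0 ?mul0r ?mulr1 ?mul1r ?invr1. Qed.

Lemma cc1 j : cc j 1 = (j == 1%N)%:R.
Proof. by rewrite /cc /=; case: j => [|[|j]] /=; rewrite ?mulr0 ?mul0r ?mulr1 ?mul1r ?invr1. Qed.

Lemma cc_bound j n : `|cc j n| <= j`!%:R.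
Proof.
rewrite /cc ger0_norm; last by rewrite !mulr_ge0 ?ler0n ?ee_ge0 ?invr_ge0.
have hf : (0 : R) < n`!%:R by rewrite ltr0n fact_gt0.
rewrite ler_pdivrMr // ler_wpM2l ?ler0n //; exact: ee_le.
Qed.

Definition SS (N : nat) : {poly int} := \prod_(j < N) ('X - ((j : nat)%:Z)%:P).

Lemma PP_comp n : PP n = map_poly (intr : int -> R) (SS n.-1) \Po ('X + (x0 n)%:P).
Proof.
rewrite /PP /SS map_prod_XsubC.
rewrite (big_morph (comp_poly ('X + (x0 n)%:P)) (fun p q => comp_polyM p q _) (comp_polyC 1 _)).
apply: eq_bigr => i _.
rewrite comp_polyB comp_polyX comp_polyC polyCB /=.
have -> : (((i : nat)%:Z)%:~R : R) = (i : nat)%:R by [].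
ring.
Qed.

Lemma coef_XaddC_exp (c : R) i l : (('X + c%:P) ^+ i)`_l = c ^+ (i - l) *+ 'C(i, l).
Proof.
rewrite addrC exprDn coef_sum.
under eq_bigr => r _ do rewrite coefMn -rmorphXn coefCM coefXn.
have [li|il] := leqP l i.
  rewrite (bigD1 (Ordinal (leq_ltn_trans li (ltnSn i)))) //= eqxx mulr1 big1 ?addr0 //.
  move=> r /eqP hr; rewrite eq_sym; case: eqP => [h|_]; last by rewrite mulr0 mul0rn.
  by exfalso; apply: hr; apply: val_inj.
rewrite bin_small // mulr0n big1 // => r _.
have : (r < l)%N by apply: leq_trans (ltn_ord r) il.
by rewrite ltn_neqAle eq_sym => /andP[/negbTE -> _]; rewrite mulr0 mul0rn.
Qed.

Lemma size_SS N : size (map_poly (intr : int -> R) (SS N)) = N.+1.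
Proof.
rewrite /SS map_prod_XsubC size_prod_XsubC.
by rewrite /index_enum -enumT -cardT card_ord.
Qed.

Lemma PP_coef n l : (PP n)`_l =
  \sum_(i < n.-1.+1) (stirling1 n.-1 i)%:~R * (x0 n ^+ (i - l) *+ 'C(i, l)).
Proof.
rewrite PP_comp coef_comp_poly size_SS; apply: eq_bigr => i _.
by rewrite coef_map coef_XaddC_exp.
Qed.

Lemma Q_link m k : (0 < m)%N -> (RR (m + 2 * k))`_m = Qfun m (2 * k) 2.
Proof.
case: m => // m _.
rewrite /RR addSn coefXM /= PP_coef /Qfun.
rewrite -addnS big_split_ord /= big1 ?add0r; last first.
  move=> i _; rewrite bin_small ?mulr0n ?mulr0 //.
apply: eq_bigr => l _ /=.
rewrite !addSn !subn1 /= addnS /= addKn /x0 -mulr_natl.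
by rewrite mulrA [X in X * _]mulrC.
Qed.

Lemma sgn_add2 m k : sgn (m + 2 * k) = (-1) ^+ k * sgn m.
Proof.
elim: k => [|k IH]; first by rewrite muln0 addn0 expr0 mul1r.
have -> : (m + 2 * k.+1 = (m + 2 * k).+2)%N by lia.
by rewrite sgnSS IH exprS; ring.
Qed.

Lemma ee_nn n : ee n n = 1.
Proof.
elim/ltn_ind: n => -[|[|n]] IH //=.
by rewrite ee_lt ?mulr0 ?add0r ?IH.
Qed.

Lemma ee_mk m k : ee (m + 2 * k) m = 4 ^+ k * (-1) ^+ k * (RR (m + 2 * k))`_m.
Proof.
have h := ee_RR (m + 2 * k) m.
rewrite sgn_add2 exprD exprM in h.
have hs : sgn m != 0 by rewrite /sgn expf_neq0 // oppr_eq0 oner_eq0.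
have h2 : (2 : R) ^+ m != 0 by rewrite expf_neq0 // pnatr_eq0.
apply: (mulIf hs); apply: (mulIf h2).
rewrite mulrAC h; rewrite (_ : (2 : R) ^+ 2 = 4); last by rewrite expr2; ring.
ring.
Qed.

Lemma cc_asin m k (t : R) : (0 < m)%N -> cc m (m + 2 * k) * t ^+ (2 * k) = asin_term m k t.
Proof.
move=> m0; rewrite /asin_term /cc.
case: eqP => [->|/eqP k0].
  rewrite muln0 addn0 ee_nn expr0 mulr1 mulr1 divff // pnatr_eq0 -lt0n fact_gt0 //.
rewrite ee_mk Q_link //.
have hb := bin_fact (leq_addr (2 * k) m).
rewrite addKn in hb.
have hF : ((m + 2 * k)`!%:R : R) = 'C(m + 2 * k, m)%:R * (m`!%:R * (2 * k)`!%:R).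
  by rewrite -!natrM hb.
have h1 : ('C(m + 2 * k, m)%:R : R) != 0 by rewrite pnatr_eq0 -lt0n bin_gt0 leq_addr.
have h2 : (m`!%:R : R) != 0 by rewrite pnatr_eq0 -lt0n fact_gt0.
have h3 : ((2 * k)`!%:R : R) != 0 by rewrite pnatr_eq0 -lt0n fact_gt0.
rewrite hF exprMn !exprM (_ : (2 : R) ^+ 2 = 4); last by rewrite expr2; ring.
move: h1 h2 h3; move: ('C(m + 2 * k, m)%:R : R) ((2 * k)`!%:R : R) (m`!%:R : R) => a b c h1 h2 h3.
move: (Qfun m (2 * k) 2) ((4 : R) ^+ k) ((-1 : R) ^+ k) (t ^+ 2 ^+ k) => Q u v w.
field.
by rewrite h1 h2 h3.
Qed.

Lemma bnd_cvg (f : R ^nat) (x z : R) (M : R) :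
  (forall n, `|f n| * `|x| ^+ n <= M) -> `|z| < `|x| -> cvgn (pseries f z).
Proof.
move=> hM zx.
have x0 : 0 < `|x| by apply: le_lt_trans zx.
set q := `|z| / `|x|.
have q0 : 0 <= q by rewrite divr_ge0.
have q1 : q < 1 by rewrite ltr_pdivrMr // mul1r.
have M0 : 0 <= M by apply: le_trans (hM 0%N); rewrite mulr_ge0.
apply: normed_cvg; rewrite /normed_series_of /=.
apply: (@series_le_cvg _ _ (geometric M q)) => //.
- by move=> n; rewrite /geometric /= mulr_ge0 // exprn_ge0.
- move=> n; rewrite /geometric /= normrM normrX.
  have -> : `|z| ^+ n = `|x| ^+ n * q ^+ n.
    by rewrite /q exprMn exprVn mulrCA divff ?mulr1 // expf_neq0 // gt_eqF.
  rewrite mulrA ler_wpM2r // exprn_ge0 //.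
- by apply: is_cvg_geometric_series; rewrite ger0_norm.
Qed.

Lemma nq_bound (q : R) n : 0 <= q -> q < 1 -> n.+1%:R * q ^+ n <= (1 - q)^-1.
Proof.
move=> q0 q1.
have h1q : 0 < 1 - q by rewrite subr_gt0.
apply: le_trans (_ : \sum_(i < n.+1) q ^+ i <= _).
  rewrite mulr_natl -[X in _ *+ X]card_ord -sumr_const.
  apply: ler_sum => i _.
  by apply: ler_wiXn2l => //; [exact: ltW | rewrite -ltnS].
have h := subrX1 q n.+1.
have hs : (1 - q) * \sum_(i < n.+1) q ^+ i = 1 - q ^+ n.+1.
  by rewrite -opprB mulNr -h opprB.
rewrite -[X in X <= _](mulKf (lt0r_neq0 h1q)) hs.
rewrite -[X in _ <= X]mulr1 ler_wpM2l ?invr_ge0 ?(ltW h1q) //.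
by rewrite gerBl exprn_ge0.
Qed.

Lemma diff_bnd (f : R ^nat) (x z : R) (M : R) :
  (forall n, `|f n| * `|x| ^+ n <= M) -> `|z| < `|x| ->
  exists M', forall n, `|pseries_diffs f n| * `|z| ^+ n <= M'.
Proof.
move=> hM zx.
have x0 : 0 < `|x| by apply: le_lt_trans zx.
set q := `|z| / `|x|.
have q0 : 0 <= q by rewrite divr_ge0.
have q1 : q < 1 by rewrite ltr_pdivrMr // mul1r.
have M0 : 0 <= M by apply: le_trans (hM 0%N); rewrite mulr_ge0.
exists (M / `|x| * (1 - q)^-1) => n.
rewrite /pseries_diffs normrM normr_nat.
have -> : `|z| ^+ n = `|x| ^+ n.+1 / `|x| * q ^+ n.
  rewrite /q exprMn exprVn exprS; field.
  by rewrite !expf_neq0 ?gt_eqF.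
have -> : n.+1%:R * `|f n.+1| * (`|x| ^+ n.+1 / `|x| * q ^+ n) =
  (`|f n.+1| * `|x| ^+ n.+1) / `|x| * (n.+1%:R * q ^+ n) by ring.
apply: ler_pM.
- by rewrite divr_ge0 // mulr_ge0 // exprn_ge0.
- by rewrite mulr_ge0 // exprn_ge0.
- by rewrite ler_pM2r ?invr_gt0.
- exact: nq_bound.
Qed.

Definition good (c : R ^nat) := forall k (r : R), 0 <= r -> r < 1 ->
  exists M, forall n, `|iter k (@pseries_diffs R) c n| * r ^+ n <= M.

Lemma good_diffs c : good c -> good (pseries_diffs c).
Proof. by move=> g k r r0 r1; have := g k.+1 r r0 r1; rewrite iterSr. Qed.

Lemma bounded_good (c : R ^nat) B : (forall n, `|c n| <= B) -> good c.
Proof.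
move=> hB k; elim: k => [|k IH] r r0 r1.
  exists B => n /=; rewrite -[X in _ <= X]mulr1; apply: ler_pM => //; first [exact: exprn_ge0 | exact: exprn_ile1 r0 (ltW r1)].
have r'0 : 0 <= (r + 1) / 2 by rewrite divr_ge0 // addr_ge0.
have [|M hM] := IH ((r + 1) / 2) r'0; first by rewrite ltr_pdivrMr //; lra.
have := @diff_bnd (iter k (@pseries_diffs R) c) ((r + 1) / 2) r M.
rewrite ger0_norm // ger0_norm //.
move=> /(_ hM) []; first by rewrite ltr_pdivlMr //; lra.
by move=> M' hM'; exists M' => n; rewrite iterS.
Qed.

Lemma good_cvg c (x : R) : good c -> `|x| < 1 -> cvgn (pseries c x).
Proof.
move=> g x1.
have r0 : 0 <= (`|x| + 1) / 2 by rewrite divr_ge0 // addr_ge0.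
have [|M hM] := g 0%N ((`|x| + 1) / 2) r0; first by rewrite ltr_pdivrMr //; lra.
apply: (@bnd_cvg _ ((`|x| + 1) / 2) _ M).
  by move=> n; rewrite (ger0_norm r0); apply: hM.
by rewrite (ger0_norm r0) ltr_pdivlMr //; lra.
Qed.

Definition Phi (c : R ^nat) (x : R) := limn (pseries c x).

Lemma Phi_derive c (x : R) : good c -> `|x| < 1 ->
  is_derive x 1 (Phi c) (Phi (pseries_diffs c) x).
Proof.
move=> g x1; set K := (`|x| + 1) / 2.
have K0 : 0 <= K by rewrite divr_ge0 // addr_ge0.
have K1 : `|K| < 1 by rewrite ger0_norm // ltr_pdivrMr //; lra.
apply: (@pseries_snd_diffs _ c K x).
- exact: good_cvg.
- by apply: good_cvg => //; apply: good_diffs.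
- by apply: good_cvg => //; do 2 apply: good_diffs.
- by rewrite (ger0_norm K0) ltr_pdivlMr //; lra.
Qed.

Definition sh1 (c : R ^nat) : R ^nat := fun n => if n is n'.+1 then c n' else 0.

Lemma sh1_cvg c (x l : R) : pseries c x @ \oo --> l ->
  pseries (sh1 c) x @ \oo --> x * l.
Proof.
move=> h; rewrite -cvg_shiftS.
have -> : [sequence pseries (sh1 c) x n.+1]_n = (fun n => x * pseries c x n).
  apply/funext => n; rewrite /pseries /series /= big_nat_recl //= mul0r add0r.
  rewrite mulr_sumr; apply: eq_bigr => i _; rewrite exprS; ring.
by apply: cvgMr.
Qed.

Lemma Phi_cvg c (x : R) : good c -> `|x| < 1 -> pseries c x @ \oo --> Phi c x.
Proof. by move=> g x1; apply: good_cvg. Qed.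

Lemma Phi_ode c (x : R) : good c -> `|x| < 1 ->
  let d1 := pseries_diffs c in let d2 := pseries_diffs d1 in
  pseries (fun n => d2 n - sh1 (sh1 d2) n - sh1 d1 n) x @ \oo -->
    (1 - x ^+ 2) * Phi d2 x - x * Phi d1 x.
Proof.
move=> g x1 d1 d2.
have g1 : good d1 by apply: good_diffs.
have g2 : good d2 by apply: good_diffs.
have h2 := Phi_cvg g2 x1; have h1 := Phi_cvg g1 x1.
have -> : pseries (fun n => d2 n - sh1 (sh1 d2) n - sh1 d1 n) x =
  (fun n => pseries d2 x n - pseries (sh1 (sh1 d2)) x n - pseries (sh1 d1) x n).
  apply/funext => n; rewrite /pseries /series /= -!sumrB; apply: eq_bigr => i _.
  ring.
have -> : (1 - x ^+ 2) * Phi d2 x - x * Phi d1 x =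
   Phi d2 x - x * (x * Phi d2 x) - x * Phi d1 x by ring.
apply: cvgB; first apply: cvgB => //.
  by apply: sh1_cvg; apply: sh1_cvg.
by apply: sh1_cvg.
Qed.

Lemma cc_ode j :
  let d1 := pseries_diffs (cc j) in let d2 := pseries_diffs d1 in
  (fun n => d2 n - sh1 (sh1 d2) n - sh1 d1 n) = (fun n => (j * j.-1)%:R * cc j.-2 n).
Proof.
move=> d1 d2; apply/funext => n.
have h := cc_rec j n.
have h' : (j * j.-1)%:R * cc j.-2 n = (n.+1 * n.+2)%:R * cc j n.+2 - (n ^ 2)%:R * cc j n.
  by rewrite h; ring.
rewrite h' /d2 /d1 /pseries_diffs /sh1.
case: n {h h'} => [|[|k]] /=.
- rewrite !natrM /=; ring.
- rewrite !natrM /=; ring.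
- rewrite !natrM /=; ring.
Qed.

Lemma Phi0 c : Phi c 0 = c 0.
Proof.
rewrite /Phi; apply: cvg_lim => //; rewrite -cvg_shiftS.
have -> : [sequence pseries c 0 n.+1]_n = cst (c 0).
  apply/funext => n; rewrite /pseries /series /= big_nat_recl //= expr0 mulr1.
  by rewrite big1 ?addr0 // => i _; rewrite expr0n /= mulr0.
exact: cvg_cst.
Qed.

Lemma sin_lt1 (t : R) : -(pi / 2) < t < pi / 2 -> `|sin t| < 1.
Proof.
move=> /andP[h1 h2].
have tI : t \in `[(- (pi / 2)), pi / 2] by rewrite in_itv /= !ltW.
rewrite lt_neqAle sin_max andbT; apply/negP => /eqP hs.
have pI : (pi / 2 : R) \in `[(- (pi / 2)), pi / 2].
  by rewrite in_itv /= lexx andbT; have := pi_gt0 R; lra.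
have mI : (- (pi / 2) : R) \in `[(- (pi / 2)), pi / 2].
  by rewrite in_itv /= lexx /=; have := pi_gt0 R; lra.
have ha1 : asin 1 = pi / 2 :> R by have := sinK pI; rewrite /= sin_pihalf.
have ham : asin (-1) = - (pi / 2) :> R by have := sinK mI; rewrite /= sinN sin_pihalf.
have ht := sinK tI; rewrite /= in ht.
move: hs; case: (ger0P (sin t)) => _ hs.
  by move: ht; rewrite hs ha1 => h; move: h2; rewrite -h ltxx.
have hs' : sin t = -1 by rewrite -hs opprK.
by move: ht; rewrite hs' ham => h; move: h1; rewrite -h ltxx.
Qed.

Lemma deriv0_cst (f df : R -> R) (u v : R) :
  (forall x, u < x < v -> is_derive x 1 f (df x)) ->
  (forall x, u < x < v -> df x = 0) ->
  forall a b, u < a < v -> u < b < v -> f a = f b.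
Proof.
move=> hd h0.
suff H : forall a b, a <= b -> u < a < v -> u < b < v -> f a = f b.
  move=> a b ha hb; have [ab|ba] := leP a b; first exact: H.
  by apply/esym/H => //; apply: ltW.
move=> a b ab /andP[ua av] /andP[ub bv].
have hder : forall x, x \in `]a, b[%R -> is_derive x 1 f (df x).
  move=> x; rewrite in_itv /= => /andP[ax xb]; apply: hd.
  by apply/andP; split; [apply: lt_trans ax | apply: lt_trans bv].
have hcont : {within `[a, b], continuous f}.
  apply: derivable_within_continuous => x; rewrite in_itv /= => /andP[ax xb].
  have : is_derive x 1 f (df x) by apply: hd; apply/andP; split;
    [apply: lt_le_trans ax | apply: le_lt_trans bv].
  by case.
have [c cI hc] := @MVT_segment R f df a b ab hder hcont.
move: cI; rewrite in_itv /= => /andP[ac cb].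
rewrite h0 ?mul0r in hc; last first.
  by apply/andP; split; [apply: lt_le_trans ac | apply: le_lt_trans bv].
by apply/esym/eqP; rewrite -subr_eq0 hc.
Qed.

Lemma Phi_scale c k (x : R) : good c -> `|x| < 1 ->
  pseries (fun n => k * c n) x @ \oo --> k * Phi c x.
Proof.
move=> g x1.
have -> : pseries (fun n => k * c n) x = (fun n => k * pseries c x n).
  apply/funext => n; rewrite /pseries /series /= mulr_sumr.
  by apply: eq_bigr => i _; rewrite mulrA.
by apply: cvgMr; apply: Phi_cvg.
Qed.

Lemma main_j j : forall t : R, -(pi / 2) < t < pi / 2 -> Phi (cc j) (sin t) = t ^+ j.
Proof.
elim/ltn_ind: j => j IH t ht.
have gc : good (cc j) by apply: (@bounded_good _ j`!%:R) => n; apply: cc_bound.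
have gd1 : good (pseries_diffs (cc j)) by apply: good_diffs.
have gd2 : good (pseries_diffs (pseries_diffs (cc j))) by apply: good_diffs.
have hpi := pi_gt0 R.
have I0 : -(pi / 2) < (0 : R) < pi / 2 by apply/andP; split; lra.
pose F1 := fun x : R => Phi (cc j) (sin x) - x ^+ j.
pose F2 := fun x : R => Phi (pseries_diffs (cc j)) (sin x) * cos x - j%:R * x ^+ j.-1.
have hX : forall n (x : R), is_derive x 1 (fun y : R => y ^+ n) (n%:R * x ^+ n.-1).
  move=> n x; have := is_deriveX n (is_derive_id x (1 : R)).
  have -> : ((@id R) ^+ n) = (fun y : R => y ^+ n).
    by apply/funext => y; rewrite exprfctE.
  by move=> h; apply: is_derive_eq h _; by rewrite [_%:A]mulr1.
have dF1 : forall x, -(pi / 2) < x < pi / 2 -> is_derive x 1 F1 (F2 x).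
  move=> x hx; have s1 := sin_lt1 hx.
  have h1 : is_derive x 1 (Phi (cc j) \o sin) (Phi (pseries_diffs (cc j)) (sin x) * cos x).
    exact: is_derive1_comp (Phi_derive gc s1) (is_derive_sin x).
  have := is_deriveB h1 (hX j x).
  have -> : (Phi (cc j) \o sin) - (fun y : R => y ^+ j) = F1 by apply/funext.
  by [].
have dF2 : forall x, -(pi / 2) < x < pi / 2 -> is_derive x 1 F2 0.
  move=> x hx; have s1 := sin_lt1 hx.
  have h1 : is_derive x 1 (Phi (pseries_diffs (cc j)) \o sin) (Phi (pseries_diffs (pseries_diffs (cc j))) (sin x) * cos x).
    exact: is_derive1_comp (Phi_derive gd1 s1) (is_derive_sin x).
  have h2 := is_deriveM h1 (is_derive_cos x).
  have h3 := is_deriveZ (j%:R : R) (hX j.-1 x).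
  have := is_deriveB h2 h3.
  have -> : (Phi (pseries_diffs (cc j)) \o sin) * cos - (j%:R : R) *: (fun y : R => y ^+ j.-1) = F2.
    by apply/funext => y; rewrite /F2 /= !fctE.
  move=> h; apply: is_derive_eq h _.
  have hode := Phi_ode gc s1; have hce := cc_ode j; simpl in hce, hode; rewrite hce in hode.
  have hsc : pseries (fun n => (j * j.-1)%:R * cc j.-2 n) (sin x) @ \oo -->
     (j * j.-1)%:R * Phi (cc j.-2) (sin x).
    apply: Phi_scale s1; apply: (@bounded_good _ (j.-2)`!%:R) => n; apply: cc_bound.
  have E := @cvg_unique _ (@Rhausdorff R) _ _ _ _ hode hsc.
  have E2 : (j * j.-1)%:R * Phi (cc j.-2) (sin x) = (j * j.-1)%:R * x ^+ j.-2 :> R.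
    have [j2|j2] := ltnP j 2.
      have -> : (j * j.-1 = 0)%N by move: j2; case: (j) => [|[|]].
      by rewrite !mul0r.
    by rewrite IH //; lia.
  move: E; rewrite E2 natrM => E.
  have c2 := cos2sin2 x.
  rewrite /=.
  transitivity ((1 - sin x ^+ 2) * Phi (pseries_diffs (pseries_diffs (cc j))) (sin x)
     - sin x * Phi (pseries_diffs (cc j)) (sin x) - j%:R * j.-1%:R * x ^+ j.-2).
    rewrite -c2; rewrite /GRing.scale /=; ring.
  by rewrite E; ring.

have F20 : F2 0 = 0.
  rewrite /F2 sin0 cos0 Phi0 /pseries_diffs cc1 mulr1.
  case: j {IH gc gd1 gd2 F1 F2 dF1 dF2} => [|[|j]] /=.
  - by rewrite expr0; ring.
  - by rewrite expr0; ring.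
  - by rewrite expr0n /=; ring.
have F2c : forall x, -(pi / 2) < x < pi / 2 -> F2 x = 0.
  move=> x hx; rewrite -F20.
  exact: (@deriv0_cst F2 (fun _ => 0) _ _ dF2 (fun _ _ => erefl) x 0 hx I0).
have := @deriv0_cst F1 F2 _ _ dF1 F2c t 0 ht I0.
rewrite {2}/F1 sin0 Phi0 cc0 expr0n.
have -> : (j == 0%N)%:R - (j == 0%N)%:R = 0 :> R by rewrite subrr.
by rewrite /F1 => /eqP; rewrite subr_eq0 => /eqP.
Qed.


Lemma cc_lt j n : (n < j)%N -> cc j n = 0.
Proof. by move=> h; rewrite /cc ee_lt // mulr0 mul0r. Qed.

Lemma cc_odd j n : odd (n + j) -> cc j n = 0.
Proof. by move=> h; rewrite /cc ee_odd // mulr0 mul0r. Qed.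

Lemma psum_split m (t : R) k :
  \sum_(0 <= n < m.+1 + 2 * k) cc m n * t ^+ n =
  t ^+ m * \sum_(0 <= i < k.+1) cc m (m + 2 * i) * t ^+ (2 * i).
Proof.
elim: k => [|k IH].
  rewrite muln0 addn0 big_nat_recr //= big_nat1 muln0 addn0 expr0 mulr1.
  rewrite big_nat_cond big1 ?add0r; first by rewrite mulrC.
  by move=> n /andP[/andP[_ hn] _]; rewrite cc_lt // mul0r.
have -> : (m.+1 + 2 * k.+1 = (m.+1 + 2 * k).+2)%N by lia.
rewrite big_nat_recr //= big_nat_recr //= IH.
rewrite [in RHS]big_nat_recr //= mulrDr.
rewrite (@cc_odd m (m.+1 + 2 * k)); last first.
  have -> : (m.+1 + 2 * k + m = (2 * (m + k)).+1)%N by lia.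
  by rewrite /= oddM.
rewrite mul0r addr0; congr (_ + _).
have -> : ((m.+1 + 2 * k).+1 = m + 2 * k.+1)%N by lia.
by rewrite exprD mulrCA.
Qed.
End Comb.

Theorem theorem2p1 (R : realType) (m : nat) (t : R) :
  (0 < m)%N -> `|t| < 1 ->
  series (fun k : nat => asin_term m k t) @ \oo --> asin_ratio_pow m t.
Proof.
move=> m0 t1.
rewrite /asin_ratio_pow.
have [->|t0] := eqVneq t 0.
  rewrite ?eqxx -cvg_shiftS.
  have -> : [sequence series (fun k => asin_term m k (0 : R)) n.+1]_n = cst 1.
    apply/funext => n; rewrite /series /= big_nat_recl //= big1 ?addr0 //.
    move=> i _; rewrite /asin_term /= mulr0 expr0n /=.
    by rewrite mulr0 mul0r.
  exact: cvg_cst.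
rewrite ?(negbTE t0).
have ht : -1 < t < 1 by rewrite -ltr_norml.
move: ht => /andP[tl tu].
have hI : -(pi / 2) < asin t < pi / 2.
  by rewrite asin_gtNpi2 ?asin_ltpi2 // ?(ltW tl) ?(ltW tu) ?tl ?tu.
have hs : sin (asin t) = t by rewrite asinK // in_itv /= !ltW.
have hmain := @main_j R m (asin t) hI; rewrite hs in hmain.
have gc : good (cc R m) by apply: (@bounded_good _ _ m`!%:R) => n; apply: cc_bound.
have hP : pseries (cc R m) t @ \oo --> asin t ^+ m by rewrite -hmain; apply: Phi_cvg.
have hsub : (fun k => pseries (cc R m) t (m.+1 + 2 * k)) @ \oo --> asin t ^+ m.
  have hf := cvg_comp _ _ (@cvg_mulnl 2 isT) (cvg_addnl m.+1).
  exact: (cvg_comp _ _ hf hP).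
rewrite -cvg_shiftS.
have -> : [sequence series (fun k => asin_term m k t) n.+1]_n =
   (fun n => t ^- m * pseries (cc R m) t (m.+1 + 2 * n)).
  apply/funext => n; rewrite /pseries /series /= psum_split mulrA mulVf ?mulr1 ?mul1r.
    by apply: eq_bigr => i _; rewrite cc_asin.
  by rewrite expf_neq0.
rewrite exprMn exprVn mulrC.
by apply: cvgMr.
Qed.
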